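(* Suppose $\beta_j\ne0$ for $j=2,\dots,k$ in the Lanczos process, and let $T_k=Y\Theta Y^{\top}$ with $Y=[y_1,\dots,y_k]$ orthogonal and $\Theta=\operatorname{diag}(\vartheta_1,\dots,\vartheta_k)$. Then the optimal value $\mu^{(k)}$ of rLGopt is the smallest root of the secular function $\widehat\chi(\lambda)=\|b_0\|^2e_1^{\top}(T_k-\lambda I)^{-2}e_1-\gamma^2=\sum_{i=1}^k\frac{\zeta_i^2}{(\lambda-\vartheta_i)^2}-\gamma^2$, where $\zeta_i=\|b_0\|e_1^{\top}y_i$. Furthermore, $(\mu^{(k)},x^{(k)})=(\mu^{(k)},-\|b_0\|(T_k-\mu^{(k)}I)^{-1}e_1)$ is a minimizer of rLGopt.
   Context: Let $M\in\mathbb{R}^{n\times n}$ be symmetric (in the paper $M=PAP$) and $0\ne b_0\in\mathbb{R}^n$, $\gamma>0$. Lanczos process: $q_0=0$, $\beta_1=\|b_0\|$, $q_1=b_0/\|b_0\|$, for $j=1,2,\dots$: $\alpha_j=q_j^{\top}Mq_j$, $\widehat q_{j+1}=Mq_j-\alpha_jq_j-\beta_jq_{j-1}$, $\beta_{j+1}=\|\widehat q_{j+1}\|$, $q_{j+1}=\widehat q_{j+1}/\beta_{j+1}$ when $\beta_{j+1}>0$. $T_k$ is the $k\times k$ symmetric tridiagonal matrix with diagonal $\alpha_1,\dots,\alpha_k$ and off-diagonal entries $\beta_2,\dots,\beta_k$. rLGopt: minimize $\lambda$ over $(\lambda,x)\in\mathbb{R}\times\mathbb{R}^k$ with $(T_k-\lambda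 I)x=-\|b_0\|e_1$ and $\|x\|=\gamma$. *)

(* Defs.v *)
From HB Require Import structures.
From mathcomp Require Import all_boot all_order all_algebra.
From mathcomp Require Import reals.
Set Implicit Arguments. Unset Strict Implicit. Unset Printing Implicit Defensive.
Import Order.TTheory GRing.Theory Num.Theory.
Local Open Scope ring_scope.

Section Lanczos.
Variables (R : realType) (n : nat).

Definition vnorm m (v : 'cV[R]_m) : R := Num.sqrt (\sum_i (v i 0) ^+ 2).

Definition e1 (m : nat) : 'cV[R]_m := \col_(i < m) (if (i : nat) == 0%N then 1 else 0).

(* One Lanczos step on the state (q_{j-1}, q_j, beta_j), producing
   (q_j, q_{j+1}, beta_{j+1}).  When beta_{j+1} = 0, q_{j+1} is set to 0
   (beta^-1 = 0 in MathComp); this never matters under the hypotheses. *)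
Definition lanczos_step (M : 'M[R]_n) (s : 'cV[R]_n * 'cV[R]_n * R) :=
  let: (qp, q, b) := s in
  let a := (q^T *m M *m q) 0 0 in
  let qh := M *m q - a *: q - b *: qp in
  let b' := vnorm qh in
  (q, b'^-1 *: qh, b').

(* lanczos_state M b0 j = (q_{j-1}, q_j, beta_j) for j >= 1 *)
Definition lanczos_state (M : 'M[R]_n) (b0 : 'cV[R]_n) (j : nat) :=
  iter j.-1 (lanczos_step M) (0, (vnorm b0)^-1 *: b0, vnorm b0).

Definition lanczos_q M b0 j : 'cV[R]_n := (lanczos_state M b0 j).1.2.
Definition lanczos_beta M b0 j : R := (lanczos_state M b0 j).2.
Definition lanczos_alpha M b0 j : R :=
  ((lanczos_q M b0 j)^T *m M *m lanczos_q M b0 j) 0 0.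

(* T_k: diagonal alpha_1..alpha_k, off-diagonal beta_2..beta_k
   (0-based entry (i,i+1) = (i+1,i) = beta_{i+2}) *)
Definition lanczos_T M b0 (k : nat) : 'M[R]_k :=
  \matrix_(i < k, j < k)
    if (i : nat) == j then lanczos_alpha M b0 i.+1
    else if (j : nat) == i.+1 then lanczos_beta M b0 j.+1
    else if (i : nat) == j.+1 then lanczos_beta M b0 i.+1
    else 0.

End Lanczos.

Definition rLG_feasible (R : realType) k (T : 'M[R]_k) (nb0 gamma : R)
  (lam : R) (x : 'cV[R]_k) : Prop :=
  (T - lam%:M) *m x = - (nb0 *: e1 R k) /\ vnorm x = gamma.

Definition secular (R : realType) k (theta : 'rV[R]_k) (zeta : 'I_k -> R)
  (gamma lam : R) : R :=
  \sum_(i < k) (zeta i) ^+ 2 / (lam - theta 0 i) ^+ 2 - gamma ^+ 2.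

(* lam is a root of the secular function (which is only defined off the
   eigenvalues theta_i) *)
Definition secular_root (R : realType) k (theta : 'rV[R]_k) (zeta : 'I_k -> R)
  (gamma lam : R) : Prop :=
  (forall i, lam != theta 0 i) /\ secular theta zeta gamma lam = 0.

(* Main.v *)
Require Import Defs.
From HB Require Import structures.
From mathcomp Require Import all_boot all_order all_algebra.
From mathcomp Require Import reals ring lra zify.
Import Order.TTheory GRing.Theory Num.Theory.
Local Open Scope ring_scope.

Section H.
Variable R : realType.

Lemma inv_of k (A B : 'M[R]_k) : A *m B = 1%:M -> invmx A = B.
Proof.
move=> h; have [uA _] := mulmx1_unit h.
by rewrite -[invmx A]mulmx1 -h mulmxA mulVmx // mul1mx.
Qed.

Lemma e1tM k m (A : 'M[R]_(k.+1, m)) j : ((e1 R k.+1)^T *m A) 0 j = A ord0 j.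
Proof.
rewrite !mxE (bigD1 ord0) //= big1 ?addr0; first by rewrite !mxE /= mul1r.
move=> i hi; rewrite !mxE; have -> : ((i:nat) == 0%N) = false.
  by apply/negP=> /eqP e; move/negP: hi; apply; apply/eqP/val_inj.
by rewrite mul0r.
Qed.

Lemma Me1 k m (A : 'M[R]_(m, k.+1)) i : (A *m e1 R k.+1) i 0 = A i ord0.
Proof.
rewrite !mxE (bigD1 ord0) //= big1 ?addr0; first by rewrite !mxE /= mulr1.
move=> j hj; rewrite !mxE; have -> : ((j:nat) == 0%N) = false.
  by apply/negP=> /eqP e; move/negP: hj; apply; apply/eqP/val_inj.
by rewrite mulr0.
Qed.

Lemma sumsq_tr k (v : 'cV[R]_k) : \sum_i (v i 0) ^+ 2 = (v^T *m v) 0 0.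
Proof. by rewrite !mxE; apply: eq_bigr => i _; rewrite !mxE expr2. Qed.

Lemma vnorm_sq k (v : 'cV[R]_k) : vnorm v ^+ 2 = \sum_i (v i 0) ^+ 2.
Proof. by rewrite /vnorm sqr_sqrtr // sumr_ge0 // => i _; rewrite sqr_ge0. Qed.

Lemma vnorm_gt0 k (v : 'cV[R]_k) : v != 0 -> 0 < vnorm v.
Proof.
move=> hv; rewrite /vnorm sqrtr_gt0 lt_def sumr_ge0 ?andbT; last first.
  by move=> i _; rewrite sqr_ge0.
apply/negP => /eqP h; move/negP: hv; apply; apply/eqP/matrixP => i j.
rewrite (ord1 j) mxE; apply/eqP; rewrite -sqrf_eq0; apply/eqP.
by apply: (psumr_eq0P _ h) => // l _; rewrite sqr_ge0.
Qed.

Lemma tri_eig k (T : 'M[R]_k.+1) (v : 'I_k.+1 -> R) (c : R) :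
  (forall r j : 'I_k.+1, (r : nat) != j -> (j : nat) != r.+1 ->
     (r : nat) != j.+1 -> T r j = 0) ->
  (forall r j : 'I_k.+1, (j : nat) = r.+1 -> T r j != 0) ->
  (forall r, \sum_j T r j * v j = c * v r) ->
  v ord0 = 0 -> forall j, v j = 0.
Proof.
move=> h0 h1 he v0.
suff H : forall m (j : 'I_k.+1), (j <= m)%N -> v j = 0 by move=> j; exact: (H j).
elim=> [|m IH] j hj.
  by have -> : j = ord0 by apply: val_inj; rewrite /=; lia.
case: (leqP j m) => hjm; first exact: IH.
have ejm : (j : nat) = m.+1 by lia.
have hm : (m < k.+1)%N by have := ltn_ord j; lia.
pose r : 'I_k.+1 := Ordinal hm.
have := he r; rewrite (IH r) /= ?leqnn // mulr0 (bigD1 j) //= big1 ?addr0.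
  move/eqP; rewrite mulf_eq0 (negPf (h1 r j _)) //= => /eqP; done.
move=> l hl; case: (leqP l m) => hlm; first by rewrite (IH l) // mulr0.
rewrite h0 ?mul0r //=.
- apply/eqP; lia.
- apply/eqP => e; move/eqP: hl; apply; apply: val_inj; rewrite /= e; lia.
- apply/eqP; lia.
Qed.

End H.

Section S.
Variable R : realType.
Variable k : nat.
Variables (theta : 'rV[R]_k.+1) (zeta : 'I_k.+1 -> R) (gamma : R).
Hypothesis hg : 0 < gamma.
Hypothesis hz : forall i, zeta i != 0.

Lemma sec_mono l m : l < m -> (forall i, m < theta 0 i) ->
  secular theta zeta gamma l < secular theta zeta gamma m.
Proof.
move=> hlm hm; rewrite /secular ltrD2r; apply: ltr_sum.
  by apply/hasP; exists ord0; rewrite ?mem_index_enum.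
move=> i _; have := hm i => hmi.
have hz2 : 0 < zeta i ^+ 2 by rewrite lt_def sqr_ge0 sqrf_eq0 hz.
rewrite ltr_pM2l // ltf_pV2 ?posrE; first nra.
- rewrite lt_def sqr_ge0 sqrf_eq0 andbT subr_eq0; apply/eqP => e; lra.
- rewrite lt_def sqr_ge0 sqrf_eq0 andbT subr_eq0; apply/eqP => e; lra.
Qed.

Definition secP : {poly R} :=
  \sum_i (zeta i ^+ 2)%:P * \prod_(j | j != i) ('X - (theta 0 j)%:P) ^+ 2
  - (gamma ^+ 2)%:P * \prod_j ('X - (theta 0 j)%:P) ^+ 2.

Lemma secP_eval l : (forall i, l != theta 0 i) ->
  secP.[l] = (\prod_j (l - theta 0 j) ^+ 2) * secular theta zeta gamma l.
Proof.
move=> hl; rewrite /secP /secular hornerD hornerN hornerM hornerC horner_sum horner_prod.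
rewrite mulrBr mulr_sumr mulrC; congr (_ - _).
  apply: eq_bigr => i _; rewrite hornerM hornerC horner_prod.
  under eq_bigr do rewrite horner_exp hornerXsubC.
  rewrite [in RHS](bigD1 i) //=.
  have : l - theta 0 i != 0 by rewrite subr_eq0.
  move=> hi; field; done.
under eq_bigr do rewrite horner_exp hornerXsubC.
by rewrite mulrC.
Qed.

Lemma prod_gt0 l : (forall i, l != theta 0 i) -> 0 < \prod_j (l - theta 0 j) ^+ 2.
Proof.
move=> hl; apply: prodr_gt0 => j _.
by rewrite lt_def sqr_ge0 sqrf_eq0 andbT subr_eq0 hl.
Qed.

Lemma sec_exists : exists mu, (forall i, mu < theta 0 i) /\
  secular theta zeta gamma mu = 0.
Proof.
pose m := [arg min_(i < ord0) theta 0 i]%O.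
have hm : forall i, theta 0 m <= theta 0 i.
  rewrite /m; case: arg_minP => // i _ H j; exact: H.
pose S := \sum_i zeta i ^+ 2.
have hS : 0 <= S by apply: sumr_ge0 => i _; rewrite sqr_ge0.
pose d := `|zeta m| / (2 * gamma).
have hd : 0 < d.
  rewrite divr_gt0 //; first by rewrite normr_gt0 hz.
  by rewrite mulr_gt0 // ltr0n.
pose b := theta 0 m - d.
pose K := S / gamma ^+ 2 + 1.
have hK : 1 <= K by rewrite lerDr divr_ge0 // sqr_ge0.
pose a := b - K.
have hb : forall i, b < theta 0 i by move=> i; have := hm i; rewrite /b; lra.
have ha : forall i, a < theta 0 i by move=> i; have := hb i; rewrite /a; lra.
have hfb : 0 < secular theta zeta gamma b.
  rewrite /secular (bigD1 m) //=.
  have -> : zeta m ^+ 2 / (b - theta 0 m) ^+ 2 = 4 * gamma ^+ 2.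
    rewrite /b /d.
    have -> : theta 0 m - `|zeta m| / (2 * gamma) - theta 0 m
       = - (`|zeta m| / (2 * gamma)) by ring.
    rewrite sqrrN expr_div_n real_normK ?num_real //.
    have := hz m; have : gamma != 0 by rewrite gt_eqF.
    move=> h1 h2; field; by apply/andP.
  have : 0 <= \sum_(i | i != m) zeta i ^+ 2 / (b - theta 0 i) ^+ 2.
    by apply: sumr_ge0 => i _; rewrite divr_ge0 // sqr_ge0.
  have : 0 < gamma ^+ 2 by rewrite exprn_gt0.
  lra.
have hfa : secular theta zeta gamma a < 0.
  rewrite /secular subr_lt0.
  apply: (le_lt_trans (y := S / K)).
    rewrite /S mulr_suml; apply: ler_sum => i _.
    rewrite ler_wpM2l ?sqr_ge0 // lef_pV2 ?posrE; last 2 first.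
    - rewrite lt_def sqr_ge0 sqrf_eq0 andbT subr_eq0; apply/eqP => e.
      by have := ha i; rewrite e ltxx.
    - lra.
    have := ha i; have := hb i; rewrite /a => h1 h2.
    have h3 : K <= theta 0 i - a by rewrite /a; lra.
    rewrite -sqrrN opprB; nra.
  rewrite ltr_pdivrMr; last lra.
  have -> : gamma ^+ 2 * K = S + gamma ^+ 2.
    rewrite /K; have : gamma != 0 by rewrite gt_eqF.
    by move=> h; field.
  have : 0 < gamma ^+ 2 by rewrite exprn_gt0.
  lra.
have hab : a <= b by rewrite /a; lra.
have nb : forall i, b != theta 0 i by move=> i; rewrite lt_eqF.
have na : forall i, a != theta 0 i by move=> i; rewrite lt_eqF.
have [mu /andP [h1 h2] hr] : exists2 x, a <= x <= b & root secP x.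
  apply: poly_ivt => //; rewrite !secP_eval //; apply/andP; split.
    by rewrite pmulr_rle0 ?prod_gt0 // ltW.
  by rewrite pmulr_rge0 ?prod_gt0 // ltW.
have hmu : forall i, mu < theta 0 i by move=> i; exact: le_lt_trans h2 (hb i).
exists mu; split => //.
have nmu : forall i, mu != theta 0 i by move=> i; rewrite lt_eqF.
move: hr; rewrite /root secP_eval // mulf_eq0 => /orP [|/eqP //].
by rewrite gt_eqF // prod_gt0.
Qed.

End S.

Theorem theorem3p2 (R : realType) (n k : nat) (M : 'M[R]_n) (b0 : 'cV[R]_n)
  (gamma : R) (Y : 'M[R]_k) (theta : 'rV[R]_k) :
  M^T = M -> b0 != 0 -> 0 < gamma -> (0 < k)%N ->
  (forall j, (2 <= j <= k)%N -> lanczos_beta M b0 j != 0) ->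
  Y^T *m Y = 1%:M ->
  lanczos_T M b0 k = Y *m diag_mx theta *m Y^T ->
  let T := lanczos_T M b0 k in
  let nb0 := vnorm b0 in
  let zeta := fun i : 'I_k => nb0 * ((e1 R k)^T *m col i Y) 0 0 in
  (forall lam, (forall i, lam != theta 0 i) ->
     secular theta zeta gamma lam =
     nb0 ^+ 2 * ((e1 R k)^T *m invmx ((T - lam%:M) ^+ 2) *m e1 R k) 0 0
       - gamma ^+ 2) /\
  exists mu : R,
    [/\ (exists x, rLG_feasible T nb0 gamma mu x),
        (forall lam x, rLG_feasible T nb0 gamma lam x -> mu <= lam),
        secular_root theta zeta gamma mu,
        (forall lam, secular_root theta zeta gamma lam -> mu <= lam) &
        rLG_feasible T nb0 gamma mu (- (nb0 *: (invmx (T - mu%:M) *m e1 R k)))].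
Proof.
case: k Y theta => [|k] Y theta hM hb0 hg hk hbeta YtY hTY T nb0 zeta //.
have YYt : Y *m Y^T = 1%:M := mulmx1C YtY.
pose D l := diag_mx (\row_i (theta 0 i - l)).
have hTl : forall l, T - l%:M = Y *m D l *m Y^T.
  move=> l; rewrite /T hTY.
  have -> : diag_mx theta = D l + l%:M.
    apply/matrixP => i j; rewrite !mxE.
    by case: eqP => _; rewrite ?mulr1n ?mulr0n ?subrK ?addr0.
  by rewrite mulmxDr mulmxDl mul_mx_scalar -scalemxAl YYt scalemx1 addrK.
have hzeta : forall i, zeta i = nb0 * Y ord0 i.
  by move=> i; rewrite /zeta e1tM mxE.
have hnb0 : 0 < nb0 := @vnorm_gt0 R _ b0 hb0.
have TY : T *m Y = Y *m diag_mx theta.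
  by rewrite /T hTY -!mulmxA YtY mulmx1.
have hY0 : forall i, Y ord0 i != 0.
  move=> i; apply/negP => /eqP h0.
  have hT0 : forall r j : 'I_k.+1, (r : nat) != j -> (j : nat) != r.+1 ->
     (r : nat) != j.+1 -> T r j = 0.
    move=> r j h1 h2 h3; rewrite /T mxE.
    by rewrite (negPf h1) (negPf h2) (negPf h3).
  have hT1 : forall r j : 'I_k.+1, (j : nat) = r.+1 -> T r j != 0.
    move=> r j e; have hj := ltn_ord j.
    rewrite /T mxE e (ltn_eqF (ltnSn r)) eqxx; apply: hbeta; lia.
  have hTe : forall r, \sum_j T r j * Y j i = theta 0 i * Y r i.
    move=> r; have := congr1 (fun A : 'M[R]_k.+1 => A r i) TY.
    rewrite mul_mx_diag mxE [in X in _ = X -> _]mxE mulrC => <-.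
    by apply: eq_bigr => j _.
  have hv := @tri_eig R k T (fun j => Y j i) (theta 0 i) hT0 hT1 hTe h0.
  have : (Y^T *m Y) i i = 1.
    by rewrite YtY mxE eqxx mulr1n.
  rewrite mxE big1; first by move/eqP; rewrite eq_sym oner_eq0.
  by move=> j _; rewrite mxE hv mulr0.
have hz0 : forall i, zeta i != 0.
  by move=> i; rewrite hzeta mulf_neq0 ?hY0 // gt_eqF.
have L3 : forall l x, (T - l%:M) *m x = - (nb0 *: e1 R k.+1) ->
    forall i, (theta 0 i - l) * (Y^T *m x) i 0 = - zeta i.
  move=> l x h i; have H := congr1 (fun A : 'cV[R]_k.+1 => (Y^T *m A) i 0) h.
  move: H; rewrite /= hTl !mulmxA YtY mul1mx -mulmxA mul_diag_mx.
  rewrite mxE [X in X * _ = _ -> _]mxE => ->.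
  rewrite mulmxN -scalemxAr hzeta.
  rewrite mxE mxE Me1 mxE //.
have excl : forall l x, (T - l%:M) *m x = - (nb0 *: e1 R k.+1) ->
    forall i, l != theta 0 i.
  move=> l x h i; apply/eqP => e; have := L3 _ _ h i.
  rewrite e subrr mul0r => /eqP; rewrite eq_sym oppr_eq0.
  by rewrite (negPf (hz0 i)).
have key : forall l x, (T - l%:M) *m x = - (nb0 *: e1 R k.+1) ->
    secular theta zeta gamma l = vnorm x ^+ 2 - gamma ^+ 2.
  move=> l x h; rewrite /secular; congr (_ - _).
  rewrite vnorm_sq sumsq_tr.
  have hL := L3 _ _ h.
  set z := Y^T *m x in hL *.
  have ex : x = Y *m z by rewrite /z mulmxA YYt mul1mx.
  rewrite ex trmx_mul mulmxA -(mulmxA z^T) YtY mulmx1 -sumsq_tr.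
  apply: eq_bigr => i _.
  have hi : theta 0 i - l != 0 by rewrite subr_eq0 eq_sym (excl _ _ h).
  have hi' : l - theta 0 i != 0 by rewrite subr_eq0 (excl _ _ h).
  have -> : z i 0 = - zeta i / (theta 0 i - l).
    by rewrite -(hL i) mulrC mulKf.
  by field; rewrite ?hi ?hi'.
have [mu [hmu hsec]] := @sec_exists R k theta zeta gamma hg hz0.
have nmu : forall i, mu != theta 0 i by move=> i; rewrite lt_eqF.
pose Di l := diag_mx (\row_i (theta 0 i - l)^-1).
have hinv : forall l, (forall i, l != theta 0 i) ->
    (T - l%:M) *m (Y *m Di l *m Y^T) = 1%:M.
  move=> l hl; rewrite hTl.
  have DDi : D l *m Di l = 1%:M.
    rewrite mulmx_diag; apply/matrixP => i j; rewrite !mxE mulfV //.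
    by rewrite subr_eq0 eq_sym hl.
  by rewrite -!mulmxA (mulmxA Y^T) YtY mul1mx (mulmxA (D l)) DDi mul1mx YYt.
have c4 : forall l, secular_root theta zeta gamma l -> mu <= l.
  move=> l [hl hs]; rewrite leNgt; apply/negP => hlt.
  by have := @sec_mono R k theta zeta gamma hz0 _ _ hlt hmu; rewrite hs hsec ltxx.
pose x5 := - (nb0 *: (invmx (T - mu%:M) *m e1 R k.+1)).
have hfeas : rLG_feasible T nb0 gamma mu x5.
  have hB := hinv mu nmu.
  have [hu _] := mulmx1_unit hB.
  have heq : (T - mu%:M) *m x5 = - (nb0 *: e1 R k.+1).
    by rewrite /x5 mulmxN -scalemxAr mulmxA mulmxV // mul1mx.
  split => //.
  have := key _ _ heq; rewrite hsec => /eqP; rewrite eq_sym subr_eq0.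
  have hv0 : 0 <= vnorm x5 by apply: sqrtr_ge0.
  rewrite eqrXn2 // ?(ltW hg); exact: eqP.
split.
  move=> l hl.
  set A := T - l%:M; set B := Y *m Di l *m Y^T.
  have hAB : A *m B = 1%:M := hinv l hl.
  have -> : invmx (A ^+ 2) = B *m B.
    apply: inv_of; rewrite expr2 -mulmxE.
    by rewrite -mulmxA (mulmxA A B) hAB mul1mx hAB.
  have -> : (e1 R k.+1)^T *m (B *m B) *m e1 R k.+1 =
      ((e1 R k.+1)^T *m Y) *m (Di l *m Di l) *m (Y^T *m e1 R k.+1).
    by rewrite /B -!mulmxA (mulmxA Y^T Y) YtY mul1mx.
  rewrite mulmx_diag mul_mx_diag mxE /secular; congr (_ - _).
  rewrite mulr_sumr; apply: eq_bigr => i _.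
  rewrite Me1 [X in _ * (X * _)]mxE e1tM !mxE hzeta.
  have hi : theta 0 i - l != 0 by rewrite subr_eq0 eq_sym hl.
  have hi' : l - theta 0 i != 0 by rewrite subr_eq0 hl.
  by field; rewrite ?hi ?hi'.
exists mu; split => //.
- by exists x5.
- move=> l x [h hn]; apply: c4; split; first exact: excl h.
  by rewrite (key _ _ h) hn subrr.
Qed.
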